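(* Let $\mu\in(0,1)$ and $\beta(a)=\frac{\mu}{1+a}$. Let $W(\tau,b)=C(\tau)(1-b)^{\mu-1}(1+e^{\tau}b)^{-\mu}$ for $\tau\ge0$, $b\in[0,1)$, with $C(\tau)>0$ such that $\int_0^1W(\tau,b)db=1$, and $\delta(\tau)=\frac{C'(\tau)}{C(\tau)^2}-\frac{\mu}{C(\tau)}$. Then $$\delta(\tau)=-\frac{e^{-\tau}}{1+e^{-\tau}}.$$ *)

(* Defs.v *)
From HB Require Import structures.
From mathcomp Require Import all_boot all_order all_algebra.
From mathcomp Require Import all_classical all_reals all_analysis.
Set Implicit Arguments. Unset Strict Implicit. Unset Printing Implicit Defensive.
Import Order.TTheory GRing.Theory Num.Theory.
Import numFieldNormedType.Exports.
Local Open Scope classical_set_scope.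
Local Open Scope ring_scope.

Definition W (R : realType) (mu : R) (C : R -> R) (tau b : R) : R :=
  C tau * (1 - b) `^ (mu - 1) * (1 + expR tau * b) `^ (- mu).

Definition delta (R : realType) (mu : R) (C : R -> R) (dC tau : R) : R :=
  dC / (C tau ^+ 2) - mu / C tau.

(* Main.v *)
Require Import Defs.
From HB Require Import structures.
From mathcomp Require Import all_boot all_order all_algebra.
From mathcomp Require Import all_classical all_reals all_analysis.
From mathcomp Require Import measurable_realfun lebesgue_integral_under.
From mathcomp Require Import ring lra.
Import Order.TTheory GRing.Theory Num.Theory.
Import numFieldNormedType.Exports.
Local Open Scope classical_set_scope.
Local Open Scope ring_scope.

Section S.
Context {R : realType}.
Notation lam := (@lebesgue_measure R).
Variable mu : R.
Hypothesis mu0 : 0 < mu.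
Hypothesis mu1 : mu < 1.

Definition h1 (b : R) := (1 - b) `^ (mu - 1).
Definition ff (t b : R) := h1 b * (1 + expR t * b) `^ (- mu).
Definition df (t b : R) :=
  - (mu * expR t * b * h1 b * (1 + expR t * b) `^ (- mu - 1)).
Definition gg (x b : R) := mu * h1 b * (1 + x * b) `^ (- mu - 1).
Definition Phi (x b : R) := - ((1 - b) `^ mu * (1 + x * b) `^ (- mu)) / (1 + x).

Local Notation B := ([set` Interval (BLeft 0%R) (BLeft 1%R)] : set R).

Lemma inB b : B b -> 0 <= b /\ b < 1.
Proof. by rewrite /= in_itv /= => /andP[]. Qed.
Lemma mh1 : measurable_fun setT h1.
Proof.
have H := (@measurableT_comp _ _ _ _ _ _ (@powR R ^~ (mu - 1)) setT (fun b : R => 1 - b) (@measurable_powR R _)).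
by apply: H; apply: measurable_funB.
Qed.

Lemma mpw (x a : R) : measurable_fun setT (fun b : R => (1 + x * b) `^ a).
Proof.
have H := (@measurableT_comp _ _ _ _ _ _ (@powR R ^~ a) setT (fun b : R => 1 + x * b) (@measurable_powR R _)).
by apply: H; apply: measurable_funD => //; apply: measurable_funM.
Qed.

Lemma mff t : measurable_fun setT (ff t).
Proof. by apply: measurable_funM; [exact: mh1|exact: mpw]. Qed.

Lemma mdf t : measurable_fun setT (df t).
Proof.
apply: measurableT_comp => //; apply: measurable_funM; last exact: mpw.
by apply: measurable_funM; [apply: measurable_funM|exact: mh1].
Qed.

Lemma mgg x : measurable_fun setT (gg x).
Proof.
apply: measurable_funM; last exact: mpw.
by apply: measurable_funM; [|exact: mh1].
Qed.
Lemma powN_le1 (y a : R) : 1 <= y -> 0 <= a -> y `^ (- a) <= 1.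
Proof.
move=> y1 a0; rewrite powRN invf_le1.
- by rewrite -(powRr0 y); exact: ler_powR.
- by apply: powR_gt0; exact: lt_le_trans ltr01 y1.
Qed.

Lemma h1_ge0 (b : R) : 0 <= h1 b.
Proof. exact: powR_ge0. Qed.

Lemma base_ge1 (t b : R) : 0 <= b -> 1 <= 1 + expR t * b.
Proof. by move=> b0; rewrite lerDl mulr_ge0 // expR_ge0. Qed.

Lemma ff_bound (t b : R) : B b -> 0 <= ff t b <= h1 b.
Proof.
move=> /inB[b0 b1]; rewrite /ff mulr_ge0 ?powR_ge0 ?h1_ge0 //=.
by rewrite ler_piMr ?h1_ge0 // powN_le1 ?base_ge1 // ltW.
Qed.

Lemma df_bound (t b : R) : B b -> `|df t b| <= mu * expR t * h1 b.
Proof.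
move=> /inB[b0 b1]; rewrite /df normrN.
have w0 : 0 <= (1 + expR t * b) `^ (- mu - 1) by exact: powR_ge0.
have w1 : (1 + expR t * b) `^ (- mu - 1) <= 1.
  by rewrite -opprD powN_le1 ?base_ge1 // addr_ge0 // ltW.
have k0 : 0 <= mu * expR t * h1 b by rewrite !mulr_ge0 ?expR_ge0 ?h1_ge0 // ltW.
have -> : mu * expR t * b * h1 b * (1 + expR t * b) `^ (- mu - 1) =
  (mu * expR t * h1 b) * (b * (1 + expR t * b) `^ (- mu - 1)) by ring.
rewrite ger0_norm; last exact: mulr_ge0 k0 (mulr_ge0 b0 w0).
by rewrite ler_piMr // mulr_ile1 // ltW.
Qed.

Lemma gg_bound (x b : R) : 0 <= x -> B b -> 0 <= gg x b <= mu * h1 b.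
Proof.
move=> x0 /inB[b0 b1].
have w1 : (1 + x * b) `^ (- mu - 1) <= 1.
  rewrite -opprD powN_le1 //; first by rewrite lerDl mulr_ge0.
  by rewrite addr_ge0 // ltW.
rewrite /gg; apply/andP; split.
  by rewrite !mulr_ge0 ?powR_ge0 ?h1_ge0 // ltW.
by rewrite ler_piMr // mulr_ge0 ?h1_ge0 // ltW.
Qed.

Lemma int_le_h1 (g : R -> R) (k : R) : measurable_fun setT g ->
  lam.-integrable B (EFin \o h1) ->
  (forall b, B b -> `|g b| <= k * h1 b) -> lam.-integrable B (EFin \o g).
Proof.
move=> mg ih gb.
apply: (@le_integrable _ _ _ lam B _ _ (EFin \o (fun b => k * h1 b))) => //.
- apply/measurable_EFinP; exact: measurable_funS mg.
- move=> b Bb /=; rewrite lee_fin; apply: (le_trans (gb b Bb)); exact: ler_norm.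
- have -> : (EFin \o (fun b => k * h1 b)) = (fun b => (k%:E * (EFin \o h1) b)%E).
    by apply/funext => b /=; rewrite EFinM.
  exact: (integrableZl _ _ ih).
Qed.

Lemma norm_int (t c : R) : 0 < c ->
  (\int[lam]_(b in B) (W mu (fun=> c) t b)%:E)%E = 1%E ->
  lam.-integrable B (EFin \o ff t) /\ \int[lam]_(b in B) ff t b = c^-1.
Proof.
move=> c0 H.
have E : (\int[lam]_(b in B) (ff t b)%:E = c^-1%:E)%E.
  move: H; rewrite /W.
  under eq_integral do rewrite -mulrA EFinM.
  rewrite ge0_integralZl_EFin //; last exact: ltW.
  - move=> H.
    have : (c^-1%:E * (c%:E * \int[lam]_(b in B) (ff t b)%:E) = c^-1%:E * 1)%E by rewrite H.
    by rewrite muleA -EFinM mulVf ?gt_eqF // mul1e mule1.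
  - by move=> b Bb; rewrite lee_fin; have /andP[] := ff_bound t b Bb.
  - by apply/measurable_EFinP; exact: measurable_funS (mff t).
split.
- apply/integrableP; split.
    by apply/measurable_EFinP; exact: measurable_funS (mff t).
  have -> : (\int[lam]_(b in B) `|(EFin \o ff t) b|)%E =
      (\int[lam]_(b in B) (ff t b)%:E)%E.
    apply: eq_integral => b; rewrite inE => Bb /=; rewrite ger0_norm //.
    by have /andP[] := ff_bound t b Bb.
  by rewrite E ltry.
- by rewrite /Rintegral E.
Qed.
Lemma int_h1 : lam.-integrable B (EFin \o ff 0) -> lam.-integrable B (EFin \o h1).
Proof.
move=> i0.
apply: (@le_integrable _ _ _ lam B _ _ (EFin \o (fun b => 2 * ff 0 b))) => //.
- apply/measurable_EFinP; exact: measurable_funS mh1.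
- move=> b Bb /=; rewrite lee_fin.
  have [b0 b1] := inB b Bb.
  rewrite /ff expR0 mul1r.
  have p1 : 1 <= (1 + b) `^ mu.
    by rewrite -[X in X <= _](powRr0 (1 + b)); apply: ler_powR; [rewrite lerDl|exact: ltW].
  have p2 : (1 + b) `^ mu <= 2.
    apply: (@le_trans _ _ ((1 + b) `^ 1)).
      by apply: ler_powR; [rewrite lerDl|exact: ltW].
    by rewrite powRr1 ?addr_ge0 //; lra.
  rewrite powRN.
  set p := (1 + b) `^ mu in p1 p2 *.
  have pq : p * p^-1 = 1 by rewrite mulfV // gt_eqF // (lt_le_trans ltr01 p1).
  have q0 : 0 <= p^-1 by rewrite invr_ge0 (le_trans ler01 p1).
  have h0 := h1_ge0 b.
  have hq0 : 0 <= h1 b * p^-1 by exact: mulr_ge0.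
  rewrite !ger0_norm ?mulr_ge0 //.
  nra.
- have -> : (EFin \o (fun b => 2 * ff 0 b)) = (fun b => (2%:E * (EFin \o ff 0) b)%E).
    by apply/funext => b /=; rewrite EFinM.
  exact: (integrableZl _ _ i0).
Qed.

Lemma is_derive_ff (t b : R) : 0 <= b -> is_derive t 1 (fun s => ff s b) (df t b).
Proof.
move=> b0.
have e1 : is_derive t 1 (fun s : R => 1 + expR s * b) (expR t * b).
  have H := @is_deriveM R R expR (cst b) t 1 (expR t) 0 (is_derive_expR t) (is_derive_cst b t 1).
  have H2 := @is_deriveD R R R (cst (1:R)) (expR * cst b) t 1 0 _ (is_derive_cst (1:R) t 1) H.
  rewrite (_ : (fun s => _) = cst 1 + expR * cst b) //.
  apply: is_derive_eq H2 _.
  rewrite scaler0 add0r /= add0r; exact: mulrC.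
have pos : 0 < 1 + expR t * b by exact: (lt_le_trans ltr01 (base_ge1 t b b0)).
have H := @is_derive1_comp R (@powR R ^~ (- mu)) (fun s : R => 1 + expR s * b) t _ _ (is_derive1_powR (- mu) pos) e1.
have H2 := @is_deriveZ R R R _ (h1 b) t 1 _ H.
rewrite (_ : (fun s => _) = h1 b \*: ((@powR R)^~ (- mu) \o (fun s : R => 1 + expR s * b))) //.
apply: is_derive_eq H2 _.
rewrite /df /=; rewrite /GRing.scale /=; ring.
Qed.
Lemma intZh1 (k : R) : lam.-integrable B (EFin \o h1) ->
  lam.-integrable B (EFin \o (fun b => k * h1 b)).
Proof.
move=> ih.
have -> : (EFin \o (fun b => k * h1 b)) = (fun b => (k%:E * (EFin \o h1) b)%E).
  by apply/funext => b /=; rewrite EFinM.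
exact: (integrableZl _ _ ih).
Qed.

Lemma d1ff (t b : R) : 0 <= b -> partial1of2 ff t b = df t b.
Proof.
move=> b0; rewrite /partial1of2 derive1E.
by case: (is_derive_ff t b b0) => _ ->.
Qed.

Lemma Fderiv (tau : R) : lam.-integrable B (EFin \o h1) ->
  (fun h => h^-1 *: (\int[lam]_(b in B) ff (h + tau) b - \int[lam]_(b in B) ff tau b))
     @ 0^' --> \int[lam]_(b in B) df tau b.
Proof.
move=> ih.
have E : \int[lam]_(b in B) df tau b = \int[lam]_(b in B) partial1of2 ff tau b.
  apply: eq_Rintegral => b; rewrite inE => Bb.
  by have [b0 _] := inB b Bb; rewrite d1ff.
rewrite E.
apply: (@cvg_differentiation_under_integral R _ _ lam ff B _ tau (tau - 1) (tau + 1) _ _ _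
  (fun b => mu * expR (tau + 1) * h1 b)).
- exact: measurable_itv.
- by rewrite /= in_itv /=; apply/andP; split; lra.
- move=> x _; apply: (@int_le_h1 (ff x) 1 (mff x) ih) => b Bb.
  have /andP[f0 f1] := ff_bound x b Bb.
  by rewrite mul1r ger0_norm.
- move=> x y _ By; have [y0 _] := inB y By.
  by case: (is_derive_ff x y y0).
- by move=> y; rewrite !mulr_ge0 ?expR_ge0 ?h1_ge0 // ltW.
- exact: intZh1.
- move=> x y; rewrite /= in_itv /= => /andP[_ xt] By.
  have [y0 _] := inB y By.
  rewrite d1ff //; apply: (le_trans (df_bound x y By)).
  apply: ler_wpM2r; first exact: h1_ge0.
  apply: ler_wpM2l; first exact: ltW.
  by rewrite ler_expR ltW.
Qed.
Lemma cont_of_der (f : R -> R) (x : R) : derivable f x 1 -> {for x, continuous f}.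
Proof. by move=> d; apply/differentiable_continuous/derivable1_diffP. Qed.

Lemma powR_split (y a : R) : 0 < y -> y `^ a = y * y `^ (a - 1).
Proof.
move=> y0; rewrite -[X in X * _](powRr1 (ltW y0)) -powRD.
  by rewrite addrC subrK.
by apply/implyP => _; rewrite gt_eqF.
Qed.

Lemma is_derive_in1 (b : R) : is_derive b 1 (fun c : R => 1 - c) (-1).
Proof.
have H := @is_deriveB R R R (cst (1:R)) id b 1 0 1 (is_derive_cst _ _ _) (is_derive_id _ _).
rewrite (_ : (fun c => _) = cst 1 - id) //.
by apply: is_derive_eq H _; rewrite sub0r.
Qed.

Lemma is_derive_in2 (x b : R) : is_derive b 1 (fun c : R => 1 + x * c) x.
Proof.
have H0 := @is_deriveZ R R R id x b 1 1 (is_derive_id _ _).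
have H := @is_deriveD R R R (cst (1:R)) (x \*: id) b 1 0 _ (is_derive_cst _ _ _) H0.
rewrite (_ : (fun c => _) = cst 1 + x \*: id) //.
apply: is_derive_eq H _; rewrite add0r; exact: mulr1.
Qed.

Lemma is_derive_u (b a : R) : b < 1 ->
  is_derive b 1 (fun c : R => (1 - c) `^ a) (a * (1 - b) `^ (a - 1) * (-1)).
Proof.
move=> b1; have pos : 0 < 1 - b by rewrite subr_gt0.
exact: (@is_derive1_comp R (@powR R ^~ a) (fun c : R => 1 - c) b _ _
   (is_derive1_powR a pos) (is_derive_in1 b)).
Qed.

Lemma is_derive_v (x b a : R) : 0 < 1 + x * b ->
  is_derive b 1 (fun c : R => (1 + x * c) `^ a) (a * (1 + x * b) `^ (a - 1) * x).
Proof.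
move=> pos.
exact: (@is_derive1_comp R (@powR R ^~ a) (fun c : R => 1 + x * c) b _ _
   (is_derive1_powR a pos) (is_derive_in2 x b)).
Qed.

Lemma der_gg (x b : R) : 0 < 1 + x * b -> b < 1 -> derivable (gg x) b 1.
Proof.
move=> pos b1.
rewrite (_ : gg x = (cst mu * h1) * (fun c => (1 + x * c) `^ (- mu - 1))) //.
apply: derivableM; last by case: (is_derive_v x b (- mu - 1) pos).
apply: derivableM; first exact: derivable_cst.
by case: (is_derive_u b (mu - 1) b1).
Qed.

Lemma is_derive_Phi (x b : R) : 0 < 1 + x -> 0 < 1 + x * b -> b < 1 ->
  is_derive b 1 (Phi x) (gg x b).
Proof.
move=> px pos b1; have pos1 : 0 < 1 - b by rewrite subr_gt0.
have Huv := is_deriveM (is_derive_u b mu b1) (is_derive_v x b (- mu) pos).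
have Hs := @is_deriveZ R R R _ (- (1 + x)^-1) b 1 _ Huv.
rewrite (_ : Phi x = (- (1 + x)^-1) \*: ((fun c : R => (1 - c) `^ mu) *
   (fun c : R => (1 + x * c) `^ (- mu)))); last first.
  apply/funext => c; rewrite /Phi.
  transitivity (- (1+x)^-1 * ((1 - c) `^ mu * (1 + x * c) `^ (- mu))).
    by field; rewrite gt_eqF.
  reflexivity.
apply: is_derive_eq Hs _.
change (- (1+x)^-1 * ((1 - b) `^ mu * (- mu * (1 + x * b) `^ (- mu - 1) * x) +
  (1 + x * b) `^ (- mu) * (mu * (1 - b) `^ (mu - 1) * -1)) = gg x b).
rewrite (powR_split (1 - b) mu pos1) (powR_split (1 + x * b) (- mu) pos) /gg /h1.
by field; rewrite gt_eqF.
Qed.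

Lemma dfid (t b : R) : 0 <= b ->
  - df t b - mu * ff t b = - gg (expR t) b.
Proof.
move=> b0; have pos : 0 < 1 + expR t * b by exact: (lt_le_trans ltr01 (base_ge1 t b b0)).
rewrite /df /ff /gg (powR_split (1 + expR t * b) (- mu) pos); ring.
Qed.
Lemma gg_int (x : R) : 0 < x -> lam.-integrable B (EFin \o h1) ->
  \int[lam]_(b in B) gg x b = (1 + x)^-1.
Proof.
move=> x0 ih.
have px : 0 < 1 + x by rewrite addr_gt0.
have posb : forall b, 0 <= b -> 0 < 1 + x * b.
  by move=> b b0; apply: (lt_le_trans ltr01); rewrite lerDl mulr_ge0 // ltW.
have igB : lam.-integrable B (EFin \o gg x).
  apply: (@int_le_h1 (gg x) mu (mgg x) ih) => b Bb.
  by have /andP[g0 g1] := gg_bound x b (ltW x0) Bb; rewrite ger0_norm.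
have igC : lam.-integrable `[0%R, 1%R] (EFin \o gg x).
  apply/integrableP; split.
    by apply/measurable_EFinP; exact: measurable_funS (mgg x).
  rewrite -integral_itv_bndo_bndc.
    by move/integrableP: igB => [].
  apply: measurableT_comp => //; apply/measurable_EFinP; exact: measurable_funS (mgg x).
have E1 : \int[lam]_(b in B) gg x b = \int[lam]_(b in `[0%R, 1%R]) gg x b.
  exact: Rintegral_itv_bndo_bndc.
have L1 := parameterized_integral_cvg_at_left ltr01 igC.
have FTC : forall r, 0 < r -> r < 1 ->
    parameterized_integral lam 0 r (gg x) = Phi x r - Phi x 0.
  move=> r r0 r1.
  rewrite /parameterized_integral /Rintegral.
  rewrite (@continuous_FTC2 _ (gg x) (Phi x) 0 r r0).
  - by rewrite -EFinB.
  - apply: derivable_within_continuous => z; rewrite in_itv /= => /andP[z0 zr].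
    apply: der_gg; [exact: posb|exact: le_lt_trans zr r1].
  - split.
    + move=> z; rewrite in_itv /= => /andP[z0 zr].
      by case: (is_derive_Phi x z px (posb z (ltW z0)) (lt_trans zr r1)).
    + apply: cvg_at_right_filter; apply: cont_of_der.
      by case: (is_derive_Phi x 0 px (posb 0 (lexx 0)) ltr01).
    + apply: cvg_at_left_filter; apply: cont_of_der.
      by case: (is_derive_Phi x r px (posb r (ltW r0)) r1).
  - move=> z; rewrite in_itv /= => /andP[z0 zr].
    rewrite derive1E.
    by case: (is_derive_Phi x z px (posb z (ltW z0)) (lt_trans zr r1)) => _ ->.
have L2 : (fun r => Phi x r - Phi x 0) @ 1^'- -->
    parameterized_integral lam 0 1 (gg x).
  have N : \forall r \near 1^'-,
      parameterized_integral lam 0 r (gg x) = Phi x r - Phi x 0.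
    apply: filterS2 (nbhs_left_gt ltr01) (nbhs_left_lt 1) => r r0 r1.
    by rewrite FTC.
  exact: (cvg_trans (@near_eq_cvg _ _ (1^'-) _
    (fun r => parameterized_integral lam 0 r (gg x)) (fun r => Phi x r - Phi x 0) N) L1).
have L3 : (fun r => Phi x r - Phi x 0) @ 1^'- --> 0 - Phi x 0.
  apply: cvgB; last exact: cvg_cst.
  have Hu : (fun r : R => (1 - r) `^ mu) @ 1^'- --> 0.
    have := @decreasing_cvg_at_left_comp R (fun r => 1 - r) (@powR R ^~ mu) (BLeft 0) 1 0.
    apply.
    - by rewrite bnd_simp.
    - by move=> p q _ _ pq; lra.
    - apply: cvg_at_left_filter; apply: cvgB; [exact: cvg_cst|exact: cvg_id].
    - by rewrite subrr; exact: powR_cvg0.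
  have Hv : (fun r : R => (1 + x * r) `^ (- mu)) @ 1^'- --> (1 + x * 1) `^ (- mu).
    have D : derivable (fun r : R => (1 + x * r) `^ (- mu)) 1 1.
      by case: (is_derive_v x 1 (- mu) (posb 1 ler01)).
    exact: (cvg_at_left_filter (cont_of_der _ _ D)).
  have Hc : (fun _ : R => (1 + x)^-1) @ 1^'- --> (1 + x)^-1 by exact: cvg_cst.
  have H := cvgM (cvgN (cvgM Hu Hv)) Hc.
  rewrite mul0r oppr0 mul0r in H.
  exact: H.
have U := cvg_unique (@Rhausdorff R) L2 L3.
rewrite E1 -[LHS]/(parameterized_integral lam 0 1 (gg x)) U /Phi.
rewrite subr0 mulr0 addr0 powR1 /=.
by field; rewrite gt_eqF.
Qed.
Lemma core (C : R -> R)
  (hCpos : forall tau : R, 0 <= tau -> 0 < C tau)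
  (hCnorm : forall tau : R, 0 <= tau ->
     (\int[lam]_(b in `[0%R, 1%R[) (W mu C tau b)%:E)%E = 1%E)
  (tau : R) (tau0 : 0 <= tau) :
    exists dC : R,
      ((fun h : R => h^-1 * (C (tau + h) - C tau)) @ 0^'+ --> dC) /\
      (0 < tau -> (fun h : R => h^-1 * (C (tau + h) - C tau)) @ 0^' --> dC) /\
      delta mu C dC tau = - (expR (- tau) / (1 + expR (- tau))).
Proof.
have hn : forall t, 0 <= t -> lam.-integrable B (EFin \o ff t) /\
    \int[lam]_(b in B) ff t b = (C t)^-1.
  by move=> t t0; exact: (norm_int t (C t) (hCpos t t0) (hCnorm t t0)).
set F := fun t => \int[lam]_(b in B) ff t b.
have ih := int_h1 (hn 0 (lexx 0)).1.
have D := Fderiv tau ih.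
set Fp := \int[lam]_(b in B) df tau b in D.
have Ft : F tau = (C tau)^-1 := (hn tau tau0).2.
have F0 : F tau != 0 by rewrite Ft invr_eq0 gt_eqF // hCpos.
have Hid : (fun h : R => h) @ 0^' --> (0:R).
  by apply: cvg_within_filter; exact: cvg_id.
pose q := fun h : R => h^-1 *: (F (h + tau) - F tau).
pose G := fun h : R => F (h + tau).
have Dq : q @ 0^' --> Fp by exact: D.
have Hc : (fun _ : R => F tau) @ 0^' --> F tau by exact: cvg_cst.
have L0 : (fun h => h * q h) @ 0^' --> 0 * Fp by apply: cvgM.
have L : (fun h => F tau + h * q h) @ 0^' --> F tau + 0 * Fp by apply: cvgD.
rewrite mul0r addr0 in L.
have Fc : G @ 0^' --> F tau.
  have E : {near 0^', (fun h => F tau + h * q h) =1 G}.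
    apply: filterS (nbhs_dnbhs_neq 0) => h h0 /=.
    rewrite /q /G.
    change (F tau + h * (h^-1 * (F (h + tau) - F tau)) = F (h + tau)).
    by rewrite mulrA mulfV // mul1r addrC subrK.
  exact: (cvg_trans (near_eq_cvg E) L).
set dC := - Fp * ((F tau)^-1 * (F tau)^-1).
have L1 : (fun h => - q h) @ 0^' --> - Fp by apply: cvgN.
have L2 : (fun h => (G h)^-1) @ 0^' --> (F tau)^-1 by exact: (cvgV F0 Fc).
have L3 : (fun h => (G h)^-1 * (F tau)^-1) @ 0^' --> (F tau)^-1 * (F tau)^-1.
  have Hc3 : (fun _ : R => (F tau)^-1) @ 0^' --> (F tau)^-1 by exact: cvg_cst.
  exact: (cvgM L2 Hc3).
have Lim : (fun h => - q h * ((G h)^-1 * (F tau)^-1)) @ 0^' --> dC.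
  exact: (cvgM L1 L3).
have key : forall h, h != 0 -> 0 <= tau + h ->
   - q h * ((G h)^-1 * (F tau)^-1) = h^-1 * (C (tau + h) - C tau).
  move=> h h0 th.
  have Ft2 : F (h + tau) = (C (tau + h))^-1 by rewrite addrC; exact: (hn _ th).2.
  have C1 : C (tau + h) != 0 by rewrite gt_eqF // hCpos.
  have C0 : C tau != 0 by rewrite gt_eqF // hCpos.
  rewrite /q /G.
  change (- (h^-1 * (F (h + tau) - F tau)) * ((F (h + tau))^-1 * (F tau)^-1) =
    h^-1 * (C (tau + h) - C tau)).
  rewrite Ft2 Ft !invrK.
  by field; rewrite h0 C0 C1.
exists dC; split; [|split].
- have E : {near 0^'+, (fun h => - q h * ((G h)^-1 * (F tau)^-1)) =1
      (fun h => h^-1 * (C (tau + h) - C tau))}.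
    apply: filterS (nbhs_right_gt 0) => h h0.
    by apply: key; [rewrite gt_eqF|rewrite addr_ge0 // ltW].
  exact: (cvg_trans (near_eq_cvg E) (cvg_dnbhs_at_right Lim)).
- move=> tpos.
  have Hg : \forall h \near 0^', - tau < h.
    have nt : - tau < 0 by rewrite oppr_lt0.
    exact: (cvgr_gt 0 Hid _ nt).
  have E : {near 0^', (fun h => - q h * ((G h)^-1 * (F tau)^-1)) =1
      (fun h => h^-1 * (C (tau + h) - C tau))}.
    apply: filterS2 (nbhs_dnbhs_neq 0) Hg => h h0 hg.
    by apply: key => //; lra.
  exact: (cvg_trans (near_eq_cvg E) Lim).
- have idf : lam.-integrable B (EFin \o df tau).
    apply: (@int_le_h1 (df tau) (mu * expR tau) (mdf tau) ih) => b Bb.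
    exact: df_bound.
  have imf : lam.-integrable B (EFin \o (fun b => mu * ff tau b)).
    apply: (@int_le_h1 _ mu _ ih) => [|b Bb].
      by apply: measurable_funM => //; exact: mff.
    have /andP[f0 f1] := ff_bound tau b Bb.
    rewrite normrM (ger0_norm f0) (ger0_norm (ltW mu0)).
    by rewrite ler_wpM2l // ltW.
  have I1 : Fp + mu * F tau = (1 + expR tau)^-1.
    rewrite -(gg_int (expR tau) (expR_gt0 tau) ih) /Fp /F.
    rewrite -RintegralZl //; last exact: (hn tau tau0).1.
    rewrite -RintegralD //.
    apply: eq_Rintegral => b; rewrite inE => Bb; have [b0 _] := inB b Bb.
    have := dfid tau b b0; lra.
  have Ct : C tau = (F tau)^-1 by rewrite Ft invrK.
  have -> : expR (- tau) / (1 + expR (- tau)) = (1 + expR tau)^-1.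
    rewrite expRN; field.
    have e0 := expR_gt0 tau.
    apply/andP; split; rewrite gt_eqF //; exact: addr_gt0.
  rewrite /delta -I1 Ct /dC.
  by field.
Qed.
End S.

Theorem lemma5 (R : realType) (mu : R) (hmu0 : 0 < mu) (hmu1 : mu < 1)
  (C : R -> R)
  (hCpos : forall tau : R, 0 <= tau -> 0 < C tau)
  (hCnorm : forall tau : R, 0 <= tau ->
     (\int[lebesgue_measure]_(b in `[0%R, 1%R[) (W mu C tau b)%:E)%E = 1%E) :
  forall tau : R, 0 <= tau ->
    exists dC : R,
      (* C'(tau): right derivative, two-sided when tau > 0 *)
      ((fun h : R => h^-1 * (C (tau + h) - C tau)) @ 0^'+ --> dC) /\
      (0 < tau -> (fun h : R => h^-1 * (C (tau + h) - C tau)) @ 0^' --> dC) /\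
      delta mu C dC tau = - (expR (- tau) / (1 + expR (- tau))).
Proof.
move=> tau tau0.
exact: (@core R mu hmu0 hmu1 C hCpos hCnorm tau tau0).
Qed.
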